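(* Let $\mathcal{X},\mathcal{Y}$ be finite sets, $\mathcal{T}=\mathbb{N}$, and let $p(X,Y)\in\Delta_{\mathcal{X}\times\mathcal{Y}}$ with $p(X)$ of full support. Put $\Lambda:=I(X;Y)$ and, for $0\le\lambda\le\Lambda$, $$\mathrm{IB}(\lambda):=\operatorname{argmin}\{\, I_q(X;T) \;:\; q(T|X)\in C(\mathcal{X},\mathcal{T}),\ I_q(T;Y)\ge \lambda\,\}.$$ Then for every $\sigma\in\mathrm{Bij}(\mathcal{X})$: (i) $\mathrm{IB}(\Lambda)=\{\gamma\circ\pi_{\mathcal{X}} : \gamma\in C_{\mathrm{cong}}(\bar{\mathcal{X}},\mathcal{T})\}$; (ii) if $\kappa\in\mathrm{IB}(\Lambda)$, then $\sigma\in G_{\mathrm{ci}}$ if and only if $\kappa\circ\sigma=\kappa$; (iii) if $\sigma\in G_{\mathrm{ci}}$, then $\kappa\circ\sigma=\kappa$ for every $0\le\lambda\le\Lambda$ and every $\kappa\in\mathrm{IB}(\lambda)$; (iv) the partition $\bar{\mathcal{X}}$ coincides with the partition of $\mathcal{X}$ into $G_{\mathrm{ci}}$-orbits, i.e. $\pi_{\mathcal{X}}$ coincides with the projection on orbits $\pi_{\mathrm{ci}}:\mathcal{X}\to\mathcal{X}/G_{\mathrm{ci}}$.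
   Context: All alphabets are finite except $\mathcal{T}=\mathbb{N}$. $\Delta_{\mathcal{A}}$ is the probability simplex on $\mathcal{A}$; $C(\mathcal{A},\mathcal{B})$ is the set of channels (conditional probabilities) $\kappa(b|a)$ from $\mathcal{A}$ to $\mathcal{B}$; functions are viewed as deterministic channels, and $\circ$ denotes channel composition $(\mu\circ\kappa)(c|a)=\sum_b\mu(c|b)\kappa(b|a)$. $\mathrm{Bij}(\mathcal{A})$ is the set of bijections of $\mathcal{A}$ and $e_{\mathcal{A}}$ the identity. A channel $\gamma\in C(\mathcal{A},\mathcal{B})$ is congruent, written $\gamma\in C_{\mathrm{cong}}(\mathcal{A},\mathcal{B})$, if there is a function $f:\mathcal{B}\to\mathcal{A}$ with $f\circ\gamma=e_{\mathcal{A}}$. For $q(T|X)\in C(\mathcal{X},\mathcal{T})$, the joint distribution is $q(x,y,t):=p(x,y)q(t|x)$ (Markov chain $T-X-Y$), and $I_q$ denotes mutual information under it. The channel invariance group $G_{\mathrm{ci}}$ is the group of $\sigma\in\mathrm{Bij}(\mathcal{X})$ with $p(Y|X)\circ\sigma=p(Y|X)$, i.e. $p(Y|\sigma(x))=p(Y|x)$ for all $x$. The equivalence relation $x\sim_{\mathcal{X}}x'\iff p(Y|x)=p(Y|x')$ has partition $\bar{\mathcal{X}}$ and projection $\pi_{\mathcal{X}}:\mathcal{X}\to\bar{\mathcal{X}}$. *)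

(* Defs.v *)
From HB Require Import structures.
From mathcomp Require Import all_boot all_order all_algebra all_fingroup.
From mathcomp Require Import all_classical all_reals all_analysis.
Set Implicit Arguments. Unset Strict Implicit. Unset Printing Implicit Defensive.
Import Order.TTheory GRing.Theory Num.Theory.
Local Open Scope ring_scope.

Section IB.
Variables (R : realType) (X Y : finType).

Definition is_joint (p : X -> Y -> R) : Prop :=
  (forall x y, 0 <= p x y) /\ \sum_x \sum_y p x y = 1.

Definition pX (p : X -> Y -> R) (x : X) : R := \sum_y p x y.
Definition pY (p : X -> Y -> R) (y : Y) : R := \sum_x p x y.
Definition pcond (p : X -> Y -> R) (x : X) (y : Y) : R := p x y / pX p x.

Definition plogq (a b : R) : R := if a == 0 then 0 else a * ln (a / b).

Definition MI_XY (p : X -> Y -> R) : R :=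
  \sum_x \sum_y plogq (p x y) (pX p x * pY p y).

Definition channel (A : Type) (k : A -> nat -> R) : Prop :=
  (forall a t, 0 <= k a t) /\
  (forall a, (\sum_(0 <= t <oo) (k a t)%:E)%E = 1%E).

(* quantities under q(x,y,t) = p(x,y) q(t|x) *)
Definition qT (p : X -> Y -> R) (q : X -> nat -> R) (t : nat) : R :=
  \sum_x pX p x * q x t.
Definition qTY (p : X -> Y -> R) (q : X -> nat -> R) (t : nat) (y : Y) : R :=
  \sum_x p x y * q x t.

Definition MI_XT (p : X -> Y -> R) (q : X -> nat -> R) : \bar R :=
  (\sum_(0 <= t <oo)
     (\sum_x plogq (pX p x * q x t) (pX p x * qT p q t))%:E)%E.

Definition MI_TY (p : X -> Y -> R) (q : X -> nat -> R) : \bar R :=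
  (\sum_(0 <= t <oo)
     (\sum_y plogq (qTY p q t y) (qT p q t * pY p y))%:E)%E.

Definition IB (p : X -> Y -> R) (lam : R) (k : X -> nat -> R) : Prop :=
  channel k /\ (lam%:E <= MI_TY p k)%E /\
  forall q : X -> nat -> R, channel q -> (lam%:E <= MI_TY p q)%E ->
    (MI_XT p k <= MI_XT p q)%E.

Definition in_Gci (p : X -> Y -> R) (s : {perm X}) : Prop :=
  forall x y, pcond p (s x) y = pcond p x y.

Definition simX (p : X -> Y -> R) (x x' : X) : bool :=
  [forall y, pcond p x y == pcond p x' y].
Definition eqclass (p : X -> Y -> R) (x : X) : {set X} :=
  [set x' | simX p x x'].
Definition Xbar (p : X -> Y -> R) : finType :=
  {A : {set X} | [exists x, A == eqclass p x]}.
Definition piX (p : X -> Y -> R) (x : X) : Xbar p :=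
  exist _ (eqclass p x)
    (introT existsP (ex_intro (fun x0 => eqclass p x == eqclass p x0) x (eqxx _))).

(* composition of the deterministic channel f : nat -> A after gamma,
   (f o gamma)(a'|a) = sum_t [f t = a'] gamma(t|a) *)
Definition congruent (A : finType) (g : A -> nat -> R) : Prop :=
  exists f : nat -> A, forall a a' : A,
    (\sum_(0 <= t <oo) (if f t == a' then g a t else 0)%:E)%E
      = ((a == a')%:R)%:E.

End IB.

(* Main.v *)
Require Import Defs.
From HB Require Import structures.
From mathcomp Require Import all_boot all_order all_algebra all_fingroup.
From mathcomp Require Import all_classical all_reals all_analysis.
From mathcomp Require Import ring lra.
Import Order.TTheory GRing.Theory Num.Theory.
Local Open Scope ring_scope.

Section LS.
Variable R : realType.

Lemma ln_le_sub1 (u : R) : 0 < u -> ln u <= u - 1.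
Proof. move=> u0; have := expR_ge1Dx (ln u); rewrite lnK ?posrE //; lra. Qed.

Lemma ln_lt_sub1 (u : R) : 0 < u -> u != 1 -> ln u < u - 1.
Proof.
move=> u0 u1; have := @expR_gt1Dx R (ln u); rewrite lnK ?posrE // ln_eq0 // u1.
move=> /(_ isT); lra.
Qed.

Lemma plogqZ (c a b : R) : 0 <= c -> plogq (c * a) (c * b) = c * plogq a b.
Proof.
rewrite le0r => /orP[/eqP->|c0]; first by rewrite !mul0r /plogq eqxx.
rewrite /plogq mulf_eq0 (gt_eqF c0) /=; case: eqP => _; first by rewrite mulr0.
by rewrite invfM mulrACA divff ?(gt_eqF c0) // mul1r mulrA.
Qed.

Lemma plogq0 (b : R) : plogq 0 b = 0.
Proof. by rewrite /plogq eqxx. Qed.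

Lemma plogq_ge (a b A B : R) : 0 <= a -> 0 <= b -> (b = 0 -> a = 0) -> 0 < A -> 0 < B ->
  a * ln (A / B) + a - b * (A / B) <= plogq a b /\
  (plogq a b = a * ln (A / B) + a - b * (A / B) -> a * B = A * b).
Proof.
move=> a0 b0 ba A0 B0; rewrite /plogq.
have [->|an0] := eqVneq a 0.
  have h : 0 <= b * (A / B) by apply: mulr_ge0 => //; apply: divr_ge0; apply: ltW.
  rewrite !mul0r; split; first lra.
  move=> e; have : b * (A / B) = 0 by lra.
  move/eqP; rewrite mulf_eq0 => /orP[/eqP->|]; first by rewrite mulr0.
  by rewrite mulf_eq0 invr_eq0 !gt_eqF.
have apos : 0 < a by rewrite lt0r an0.
have bpos : 0 < b by rewrite lt0r b0 andbT; apply/eqP => /ba /eqP; rewrite (negPf an0).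
set u := (b * A) / (a * B).
have upos : 0 < u by rewrite divr_gt0 ?mulr_gt0.
have key : a * ln (a / b) = a * ln (A / B) - a * ln u.
  rewrite -mulrBr; congr (_ * _).
  rewrite /u -ln_div ?posrE ?divr_gt0 ?mulr_gt0 //; congr ln.
  by field; rewrite !gt_eqF.
have au : a * u = b * (A / B) by rewrite /u; field; rewrite !gt_eqF.
rewrite key; split.
  have h := @ln_le_sub1 u upos.
  have : a * ln u <= a * (u - 1) by rewrite ler_pM2l.
  rewrite mulrBr mulr1 au; lra.
move=> e.
have [u1|u1] := eqVneq u 1.
  have : b * A = u * (a * B) by rewrite /u; field; rewrite !gt_eqF.
  by rewrite u1 mul1r mulrC => <-.
have h := @ln_lt_sub1 u upos u1.
have : a * ln u < a * (u - 1) by rewrite ltr_pM2l.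
rewrite mulrBr mulr1 au; lra.
Qed.

Arguments plogq_ge {a b A B}.

Lemma logsum (I : finType) (a b : I -> R) :
  (forall i, 0 <= a i) -> (forall i, 0 <= b i) -> (forall i, b i = 0 -> a i = 0) ->
  plogq (\sum_i a i) (\sum_i b i) <= \sum_i plogq (a i) (b i) /\
  (\sum_i plogq (a i) (b i) = plogq (\sum_i a i) (\sum_i b i) ->
     forall i, a i * \sum_j b j = (\sum_j a j) * b i).
Proof.
move=> a0 b0 ba.
set A := \sum_i a i; set B := \sum_i b i.
have A0 : 0 <= A by rewrite sumr_ge0.
have [Aeq|Apos] := eqVneq A 0.
  have ai0 : forall i, a i = 0.
    by move=> i; apply: (psumr_eq0P _ Aeq) => // j _; exact: a0.
  rewrite Aeq plogq0; under eq_bigr do rewrite ai0 plogq0.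
  rewrite big1 //; split => // _ i; by rewrite ai0 !mul0r.

have Apos' : 0 < A by rewrite lt0r Apos.
have Bpos : 0 < B.
  have [i ai] : exists i, a i != 0.
    apply/existsP; apply: contraNT Apos => /existsPn h.
    by apply/eqP; rewrite /A big1 // => i _; apply/eqP; move: (h i); rewrite negbK.
  have bi : b i != 0 by apply: contra ai => /eqP/ba ->.
  apply: (@lt_le_trans _ _ (b i)); first by rewrite lt0r bi b0.
  by rewrite /B (bigD1 i) //= lerDl sumr_ge0.
set c := A / B.
have hl : forall i, a i * ln c + a i - b i * c <= plogq (a i) (b i).
  by move=> i; case: (plogq_ge (a0 i) (b0 i) (@ba i) Apos' Bpos).
have sumlow : \sum_i (a i * ln c + a i - b i * c) = plogq A B.
  rewrite !big_split /= -!mulr_suml sumrN -/A -/B.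
  rewrite /plogq (negPf Apos) /c -mulr_suml -/B; field; last by rewrite gt_eqF.
split; first by rewrite -sumlow; apply: ler_sum => i _.
move=> e i.
have d0 : \sum_i (plogq (a i) (b i) - (a i * ln c + a i - b i * c)) = 0.
  by rewrite sumrB e sumlow subrr.
have := (@psumr_eq0P _ _ xpredT (fun j => plogq (a j) (b j) - (a j * ln c + a j - b j * c)) (fun j _ => ltac:(rewrite subr_ge0; exact: hl j)) d0 i isT).
move/eqP; rewrite subr_eq0 => /eqP.
by case: (plogq_ge (a0 i) (b0 i) (@ba i) Apos' Bpos) => _ h /h.
Qed.

Lemma logsumP (I : finType) (P : pred I) (a b : I -> R) :
  (forall i, 0 <= a i) -> (forall i, 0 <= b i) -> (forall i, b i = 0 -> a i = 0) ->
  plogq (\sum_(i | P i) a i) (\sum_(i | P i) b i) <= \sum_(i | P i) plogq (a i) (b i) /\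
  (\sum_(i | P i) plogq (a i) (b i) = plogq (\sum_(i | P i) a i) (\sum_(i | P i) b i) ->
     forall i, P i -> a i * \sum_(j | P j) b j = (\sum_(j | P j) a j) * b i).
Proof.
move=> a0 b0 ba.
have := @logsum I (fun i => if P i then a i else 0) (fun i => if P i then b i else 0).
rewrite -!big_mkcond /=.
have -> : \sum_i plogq (if P i then a i else 0) (if P i then b i else 0) =
          \sum_(i | P i) plogq (a i) (b i).
  by rewrite [RHS]big_mkcond /=; apply: eq_bigr => i _; case: (P i); rewrite ?plogq0.
case.
- by move=> i; case: (P i).
- by move=> i; case: (P i).
- by move=> i; case: (P i) => // /ba.
move=> h1 h2; split => // e i Pi; have := h2 e i; by rewrite Pi.
Qed.

Lemma term_le_series (f : nat -> \bar R) t : (forall i, (0 <= f i)%E) ->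
  (f t <= \sum_(0 <= i <oo) f i)%E.
Proof.
move=> f0; apply: (le_trans _ (nneseries_lim_ge t.+1 (fun n _ _ => f0 n))).
rewrite big_nat_recr //= leeDr //; exact: sume_ge0.
Qed.

Lemma series_eq (u v : nat -> R) : (forall t, 0 <= u t) -> (forall t, u t <= v t) ->
  (\sum_(0 <= t <oo) (v t)%:E <= \sum_(0 <= t <oo) (u t)%:E)%E ->
  (\sum_(0 <= t <oo) (u t)%:E < +oo)%E -> forall t, u t = v t.
Proof.
move=> u0 uv le fin t.
have d0 : forall t, 0 <= v t - u t by move=> s; rewrite subr_ge0.
have eD : (\sum_(0 <= t <oo) (v t)%:E = \sum_(0 <= t <oo) (u t)%:E + \sum_(0 <= t <oo) (v t - u t)%:E)%E.
  rewrite -nneseriesD; last 2 first.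
  - by move=> i _ _; rewrite lee_fin.
  - by move=> i _ _; rewrite lee_fin.
  by apply: eq_eseriesr => i _; rewrite -EFinD addrC subrK.
have S0 : (0 <= \sum_(0 <= t <oo) (u t)%:E)%E by apply: nneseries_ge0 => i _ _; rewrite lee_fin.
have D0 : (0 <= \sum_(0 <= t <oo) (v t - u t)%:E)%E by apply: nneseries_ge0 => i _ _; rewrite lee_fin.
move: le fin S0 D0; rewrite eD.
set S := (\sum_(0 <= t <oo) (u t)%:E)%E; set D := (\sum_(0 <= t <oo) (v t - u t)%:E)%E.
move=> le fin S0 D0.
have Dle : (D <= 0)%E.
  move: le fin S0 D0; case: S => [s| |] //; case: D => [d| |] //.
  by rewrite -EFinD !lee_fin => le _ _ _; lra.
have := @term_le_series (fun t => (v t - u t)%:E) t (fun i => ltac:(rewrite lee_fin; exact: d0 i)).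
rewrite -/D => h; have : ((v t - u t)%:E <= 0)%E by apply: le_trans h Dle.
rewrite lee_fin => h2; have := uv t; lra.
Qed.

Lemma series_ind (n : nat) : (\sum_(0 <= t <oo) ((if t == n then 1 else 0 : R)%:E) = 1)%E.
Proof.
rewrite (@nneseriesD1 R _ n) //; last by move=> k _; case: (k == n); rewrite lee_fin.
by rewrite eqxx eseries0 ?adde0 // => i _ /andP[_ /negPf ->].
Qed.

End LS.
Section Main.
Variables (R : realType) (X Y : finType) (p : X -> Y -> R).
Hypothesis Hj : is_joint p.
Hypothesis Hpos : forall x, 0 < pX p x.

Lemma p0 x y : 0 <= p x y. Proof. by case: Hj. Qed.
Lemma pX_ne0 x : pX p x != 0. Proof. by rewrite gt_eqF. Qed.
Lemma sumpX : \sum_x pX p x = 1. Proof. by case: Hj. Qed.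
Lemma sumpY : \sum_y pY p y = 1.
Proof. by rewrite /pY exchange_big; case: Hj. Qed.
Lemma pY_ge0 y : 0 <= pY p y.
Proof. by rewrite sumr_ge0 // => i _; exact: p0. Qed.
Lemma pY0 x {y} : pY p y = 0 -> p x y = 0.
Proof.
move=> h; apply: (psumr_eq0P (P := xpredT) (F := fun x => p x y)) => //.
by move=> i _; exact: p0.
Qed.
Lemma pdec x y : p x y = pX p x * pcond p x y.
Proof. by rewrite /pcond mulrC divfK ?pX_ne0. Qed.
Lemma pcond0 x y : 0 <= pcond p x y.
Proof. by rewrite /pcond divr_ge0 ?p0 // ltW. Qed.

Notation sim := (simX p).
Lemma simP x x' : reflect (forall y, pcond p x y = pcond p x' y) (sim x x').
Proof. by apply: (iffP forallP) => h y; [exact/eqP | exact/eqP]. Qed.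
Lemma sim_refl x : sim x x. Proof. by apply/simP. Qed.
Lemma sim_sym {x x'} : sim x x' -> sim x' x.
Proof. by move/simP => h; apply/simP => y. Qed.
Lemma sim_trans {x1 x2 x3} : sim x1 x2 -> sim x2 x3 -> sim x1 x3.
Proof. by move/simP => h1 /simP h2; apply/simP => y; rewrite h1. Qed.
Lemma sim_eqr {x x'} z : sim x x' -> sim x z = sim x' z.
Proof.
move=> h; apply/idP/idP => hz; [exact: sim_trans (sim_sym h) hz | exact: sim_trans h hz].
Qed.

Lemma Xbar_eq (A B : Xbar p) : proj1_sig A = proj1_sig B -> A = B.
Proof.
case: A => a ha; case: B => b hb /= e; subst b; congr exist; exact: bool_irrelevance.
Qed.

Lemma piX_eq x x' : piX p x = piX p x' <-> sim x x'.
Proof.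
split.
  move/(f_equal (@proj1_sig _ _)) => /= e.
  have : x' \in eqclass p x' by rewrite inE sim_refl.
  by rewrite -e inE.
move=> h; apply: Xbar_eq => /=; apply/setP => z; rewrite !inE; exact: sim_eqr.
Qed.

Definition rep (c : Xbar p) : X := xchoose (existsP (proj2_sig c)).
Lemma rep_spec c : piX p (rep c) = c.
Proof.
apply: Xbar_eq => /=; have := xchooseP (existsP (proj2_sig c)).
by rewrite -/(rep c) => /eqP ->.
Qed.

Definition pcls x := \sum_(z | sim x z) pX p z.
Lemma pcls_pos x : 0 < pcls x.
Proof.
rewrite /pcls (bigD1 x) ?sim_refl //=; apply: (lt_le_trans (Hpos x)).
by rewrite lerDl sumr_ge0 // => i _; exact: ltW.
Qed.
Lemma pcls_le1 x : pcls x <= 1.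
Proof.
rewrite -sumpX /pcls [X in _ <= X](bigID (sim x)) /= lerDl sumr_ge0 // => i _; exact: ltW.
Qed.
Lemma pcls_sim {x x'} : sim x x' -> pcls x = pcls x'.
Proof. by move=> h; apply: eq_bigl => z; exact: sim_eqr. Qed.

Definition w x z := if sim x z then pX p z / pcls x else 0.
Lemma w0 x z : 0 <= w x z.
Proof. by rewrite /w; case: ifP => // _; rewrite divr_ge0 // ltW // pcls_pos. Qed.
Lemma sum_w x : \sum_z w x z = 1.
Proof.
rewrite /w -big_mkcond /= -mulr_suml -/(pcls x) divff //; exact: lt0r_neq0 (pcls_pos x).
Qed.
Lemma sum_pXw z : \sum_x pX p x * w x z = pX p z.
Proof.
rewrite /w (eq_bigr (fun x => if sim z x then pX p x * (pX p z / pcls z) else 0)).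
  rewrite -big_mkcond /= -mulr_suml -/(pcls z) mulrCA divff ?mulr1 //.
  exact: lt0r_neq0 (pcls_pos z).
move=> x _; have -> : sim x z = sim z x.
  by apply/idP/idP; apply: sim_sym.
by case: ifP => [h|]; rewrite ?mulr0 // (pcls_sim h).
Qed.
Lemma EXw (f : X -> R) : \sum_x pX p x * (\sum_z w x z * f z) = \sum_z pX p z * f z.
Proof.
under eq_bigr do rewrite mulr_sumr.
rewrite exchange_big /=; apply: eq_bigr => z _.
by rewrite -sum_pXw mulr_suml; apply: eq_bigr => x _; rewrite mulrA.
Qed.
Lemma w_sim {x x'} z : sim x x' -> w x z = w x' z.
Proof. by move=> h; rewrite /w (sim_eqr _ h) (pcls_sim h). Qed.
Lemma w_pos {x z} : 0 < w x z -> sim x z.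
Proof. by rewrite /w; case: ifP => //; rewrite ltxx. Qed.

Lemma ch0 (q : X -> nat -> R) : channel q -> forall x t, 0 <= q x t.
Proof. by case. Qed.
Lemma ch1 (q : X -> nat -> R) : channel q -> forall x,
  (\sum_(0 <= t <oo) (q x t)%:E = 1)%E.
Proof. by case. Qed.

Lemma S1 (q : X -> nat -> R) (c : X -> R) : channel q -> (forall x, 0 <= c x) ->
  (\sum_(0 <= t <oo) (\sum_x c x * q x t)%:E = (\sum_x c x)%:E)%E.
Proof.
move=> ch c0.
under eq_eseriesr do rewrite -sumEFin.
rewrite nneseries_sum; last by move=> x t _; rewrite lee_fin mulr_ge0 // ch0.
rewrite -sumEFin; apply: eq_bigr => x _.
under eq_eseriesr do rewrite EFinM.
rewrite nneseriesZl; last by move=> t _; rewrite lee_fin ch0.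
by rewrite ch1 // mule1.
Qed.


Lemma plogq_same (a : R) : plogq a a = 0.
Proof.
rewrite /plogq; case: eqP => // /eqP a0; by rewrite divff // ln1 mulr0.
Qed.

Definition AT (q : X -> nat -> R) t :=
  \sum_x plogq (pX p x * q x t) (pX p x * qT p q t).
Definition BT (q : X -> nat -> R) t :=
  \sum_y plogq (qTY p q t y) (qT p q t * pY p y).
Definition K x := \sum_y plogq (pcond p x y) (pY p y).
Definition dd x := \sum_y plogq (p x y) (pX p x * pY p y).
Definition DT (q : X -> nat -> R) t := \sum_x q x t * dd x.
Definition singleT (q : X -> nat -> R) t :=
  forall x x', 0 < q x t -> 0 < q x' t -> sim x x'.
Definition single q := forall t, singleT q t.
Definition cconst (q : X -> nat -> R) := forall t x x', sim x x' -> q x t = q x' t.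

Lemma ddE x : dd x = pX p x * K x.
Proof.
rewrite /dd /K mulr_sumr; apply: eq_bigr => y _.
by rewrite pdec plogqZ // ltW.
Qed.
Lemma K_sim {x x'} : sim x x' -> K x = K x'.
Proof. by move/simP => h; rewrite /K; apply: eq_bigr => y _; rewrite h. Qed.
Lemma sum_pcond x : \sum_y pcond p x y = 1.
Proof. by rewrite /pcond -mulr_suml divff // pX_ne0. Qed.
Lemma K_ge0 x : 0 <= K x.
Proof.
have [h _] := @logsum R Y (pcond p x) (pY p) (pcond0 x) (fun y => ltac:(rewrite sumr_ge0 // => i _; exact: p0))
  (fun y e => ltac:(by rewrite /pcond (pY0 x e) mul0r)).
by move: h; rewrite sum_pcond sumpY plogq_same.
Qed.
Lemma dd_ge0 x : 0 <= dd x.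
Proof. by rewrite ddE mulr_ge0 ?K_ge0 // ltW. Qed.

Section ch.
Variable q : X -> nat -> R.
Hypothesis chq : channel q.

Lemma qT0 t : 0 <= qT p q t.
Proof. by rewrite sumr_ge0 // => x _; rewrite mulr_ge0 ?ch0 // ltW. Qed.
Lemma qT_zero t : qT p q t = 0 -> forall x, q x t = 0.
Proof.
move=> h x; have := @psumr_eq0P _ _ xpredT (fun x => pX p x * q x t)
  (fun i _ => ltac:(by rewrite mulr_ge0 ?ch0 // ltW)) h x isT.
by move/eqP; rewrite mulf_eq0 (negPf (pX_ne0 _)) /= => /eqP.
Qed.
Lemma qTY0 t y : 0 <= qTY p q t y.
Proof. by rewrite sumr_ge0 // => x _; rewrite mulr_ge0 ?ch0 ?p0. Qed.
Lemma qTY_sum t : \sum_y qTY p q t y = qT p q t.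
Proof.
rewrite /qTY exchange_big; apply: eq_bigr => x _; by rewrite -mulr_suml.
Qed.
Lemma qTY_zero t y : qT p q t * pY p y = 0 -> qTY p q t y = 0.
Proof.
move/eqP; rewrite mulf_eq0 => /orP[/eqP/qT_zero h|/eqP h];
  rewrite /qTY big1 // => x _; by rewrite ?h ?(pY0 x h) ?mulr0 ?mul0r.
Qed.

Lemma BT_ge0 t : 0 <= BT q t.
Proof.
have [h _] := @logsum R Y (qTY p q t) (fun y => qT p q t * pY p y) (qTY0 t)
  (fun y => ltac:(rewrite mulr_ge0 ?qT0 // sumr_ge0 // => i _; exact: p0))
  (@qTY_zero t).
by move: h; rewrite qTY_sum -mulr_sumr sumpY mulr1 plogq_same.
Qed.

Lemma BT_DT t : BT q t <= DT q t /\ (BT q t = DT q t -> singleT q t).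
Proof.
pose a y x := p x y * q x t.
pose b y x := pX p x * q x t * pY p y.
have Hy : forall y, plogq (\sum_x a y x) (\sum_x b y x) <= \sum_x plogq (a y x) (b y x) /\
   (\sum_x plogq (a y x) (b y x) = plogq (\sum_x a y x) (\sum_x b y x) ->
     forall x, a y x * \sum_j b y j = (\sum_j a y j) * b y x).
  move=> y; apply: logsum.
  - by move=> x; rewrite mulr_ge0 ?p0 ?ch0.
  - by move=> x; rewrite !mulr_ge0 ?ch0 ?pY_ge0 // ltW.
  - move=> x /eqP; rewrite !mulf_eq0 (negPf (pX_ne0 _)) /= => /orP[/eqP e|/eqP h]; rewrite /a.
      by rewrite e mulr0.
    by rewrite (pY0 x h) mul0r.
have ea : forall y, \sum_x a y x = qTY p q t y by [].
have eb : forall y, \sum_x b y x = qT p q t * pY p y by move=> y; rewrite /b -mulr_suml.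
have eab : forall y x, plogq (a y x) (b y x) = q x t * plogq (p x y) (pX p x * pY p y).
  move=> y x; rewrite /a /b -plogqZ ?ch0 //; congr plogq; ring.
have eDT : DT q t = \sum_y \sum_x plogq (a y x) (b y x).
  rewrite /DT exchange_big; apply: eq_bigr => x _.
  by rewrite /dd mulr_sumr; apply: eq_bigr => y _; rewrite eab.
have le1 : forall y, plogq (qTY p q t y) (qT p q t * pY p y) <= \sum_x plogq (a y x) (b y x).
  by move=> y; rewrite -ea -eb; case: (Hy y).
rewrite eDT /BT; split; first by apply: ler_sum => y _; exact: le1.
move=> e x1 x2 q1 q2.
have ey : forall y, \sum_x plogq (a y x) (b y x) = plogq (qTY p q t y) (qT p q t * pY p y).
  move=> y; apply/eqP; rewrite -subr_eq0; apply/eqP.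
  have d0 : \sum_y (\sum_x plogq (a y x) (b y x) - plogq (qTY p q t y) (qT p q t * pY p y)) = 0.
    by rewrite sumrB e subrr.
  exact: (@psumr_eq0P _ _ xpredT (fun y => \sum_x plogq (a y x) (b y x) - plogq (qTY p q t y) (qT p q t * pY p y)) (fun y _ => ltac:(rewrite subr_ge0; exact: le1 y)) d0 y isT).
have Tpos : 0 < qT p q t.
  rewrite lt0r qT0 andbT; apply/eqP => /qT_zero h; move: q1; by rewrite h ltxx.
apply/simP => y.
have [Py0|Pypos] := eqVneq (pY p y) 0.
  by rewrite /pcond !(pY0 _ Py0) !mul0r.
have key : forall x, 0 < q x t -> pcond p x y * qT p q t = qTY p q t y.
  move=> x qx; have := (proj2 (Hy y)) (ltac:(by rewrite ey ea eb)) x.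
  rewrite ea eb /a /b => e1.
  have e2 : (p x y * qT p q t) * (q x t * pY p y) = (qTY p q t y * pX p x) * (q x t * pY p y).
    rewrite [LHS](_ : _ = p x y * q x t * (qT p q t * pY p y)); last by ring.
    rewrite e1; ring.
  move/mulIf: e2 => /(_ (ltac:(by rewrite mulf_neq0 // gt_eqF))) e3.
  by rewrite /pcond mulrAC e3 mulfK ?pX_ne0.
apply: (mulIf (lt0r_neq0 Tpos)); by rewrite !key.
Qed.

Lemma single_BT t : singleT q t -> BT q t = DT q t.
Proof.
move=> st; case: (pickP (fun x => 0 < q x t)) => [x0 h0|hn]; last first.
  have z : forall x, q x t = 0.
    by move=> x; apply/eqP; rewrite eq_le ch0 // andbT leNgt hn.
  have zT : qT p q t = 0 by rewrite /qT big1 // => x _; rewrite z mulr0.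
  rewrite /BT /DT !big1 // => [x _|y _]; first by rewrite z mul0r.
  by rewrite /qTY big1 ?plogq0 // => x _; rewrite z mulr0.
have qc : forall x y, q x t * pcond p x y = q x t * pcond p x0 y.
  move=> x y; have [->|nz] := eqVneq (q x t) 0; first by rewrite !mul0r.
  have qx : 0 < q x t by rewrite lt0r nz ch0.
  by move/simP: (st x x0 qx h0) => ->.
have qk : forall x, q x t * K x = q x t * K x0.
  move=> x; have [->|nz] := eqVneq (q x t) 0; first by rewrite !mul0r.
  have qx : 0 < q x t by rewrite lt0r nz ch0.
  by rewrite (K_sim (st x x0 qx h0)).
have eY : forall y, qTY p q t y = qT p q t * pcond p x0 y.
  move=> y; rewrite /qTY /qT mulr_suml; apply: eq_bigr => x _.
  by rewrite pdec -mulrA [pcond _ _ _ * _]mulrC qc mulrA.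
rewrite /BT /DT.
under eq_bigr do rewrite eY plogqZ ?qT0 //.
rewrite -mulr_sumr -/(K x0) /qT mulr_suml; apply: eq_bigr => x _.
by rewrite ddE mulrCA qk mulrA.
Qed.

Lemma DT_series : (\sum_(0 <= t <oo) (DT q t)%:E = (MI_XY p)%:E)%E.
Proof.
rewrite /DT; under eq_eseriesr do under eq_bigr do rewrite mulrC.
by rewrite S1 //; exact: dd_ge0.
Qed.

Lemma MITY_single : single q -> MI_TY p q = (MI_XY p)%:E.
Proof.
move=> sq; rewrite /MI_TY -DT_series; apply: eq_eseriesr => t _.
by rewrite -single_BT.
Qed.

Lemma MITY_le : (MI_TY p q <= (MI_XY p)%:E)%E.
Proof.
rewrite /MI_TY -DT_series; apply: lee_nneseries => [t _ _|t _].
  by rewrite lee_fin BT_ge0.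
by rewrite lee_fin; case: (BT_DT t).
Qed.

Lemma feasible_single : ((MI_XY p)%:E <= MI_TY p q)%E -> single q.
Proof.
move=> h t.
have e := @series_eq R (BT q) (DT q) BT_ge0 (fun t => proj1 (BT_DT t))
  (ltac:(by rewrite DT_series; exact: h)) (le_lt_trans MITY_le (ltry _)) t.
exact: (proj2 (BT_DT t)).
Qed.

End ch.

Lemma pos_sum (I : finType) (P : pred I) (f : I -> R) : 0 < \sum_(i | P i) f i ->
  exists i, P i /\ f i != 0.
Proof.
move=> h; case: (pickP (fun i => P i && (f i != 0))) => [i /andP[Pi fi]|hn].
  by exists i.
move: h; rewrite big1 ?ltxx // => i Pi; by move: (hn i); rewrite Pi /= => /negbFE/eqP.
Qed.

Definition avg (q : X -> nat -> R) x t := \sum_z w x z * q z t.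

Lemma w_classsum x (f : X -> R) : \sum_z w x z * f z = (\sum_(z | sim x z) pX p z * f z) / pcls x.
Proof.
rewrite mulr_suml [RHS]big_mkcond /=; apply: eq_bigr => z _; rewrite /w.
by case: ifP => _; rewrite ?mul0r // mulrAC.
Qed.

Section ch2.
Variable q : X -> nat -> R.
Hypothesis chq : channel q.

Lemma avg_ch : channel (avg q).
Proof.
split; first by move=> x t; rewrite sumr_ge0 // => z _; rewrite mulr_ge0 ?w0 ?ch0.
by move=> x; rewrite /avg S1 // ?sum_w // => z; exact: w0.
Qed.

Lemma avg_cconst : cconst (avg q).
Proof. by move=> t x x' h; rewrite /avg; apply: eq_bigr => z _; rewrite (w_sim z h). Qed.

Lemma avg_pos x t : 0 < avg q x t -> exists z, sim x z /\ 0 < q z t.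
Proof.
move/pos_sum => [z [_ nz]]; exists z.
have wz : w x z != 0 by apply: contra nz => /eqP->; rewrite mul0r.
have qz : q z t != 0 by apply: contra nz => /eqP->; rewrite mulr0.
split; first by apply: w_pos; rewrite lt0r wz w0.
by rewrite lt0r qz ch0.
Qed.

Lemma avg_single : single q -> single (avg q).
Proof.
move=> sq t x x' /avg_pos [z [xz qz]] /avg_pos [z' [xz' qz']].
exact: sim_trans xz (sim_trans (sq t z z' qz qz') (sim_sym xz')).
Qed.

Lemma qT_avg t : qT p (avg q) t = qT p q t.
Proof. by rewrite /qT /avg EXw. Qed.

Lemma qTY_avg t y : qTY p (avg q) t y = qTY p q t y.
Proof.
rewrite /qTY /avg.
transitivity (\sum_x pX p x * \sum_z w x z * (pcond p z y * q z t)).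
  apply: eq_bigr => x _; rewrite pdec -mulrA; congr (_ * _).
  rewrite mulr_sumr; apply: eq_bigr => z _.
  have [wz|] := eqVneq (w x z) 0; first by rewrite wz !mul0r mulr0.
  move=> nz; have xz : sim x z by apply: w_pos; rewrite lt0r nz w0.
  by move/simP: xz => ->; rewrite mulrCA mulrA.
by rewrite EXw; apply: eq_bigr => z _; rewrite pdec mulrA.
Qed.

Lemma MITY_avg : MI_TY p (avg q) = MI_TY p q.
Proof.
rewrite /MI_TY; apply: eq_eseriesr => t _; congr EFin.
by apply: eq_bigr => y _; rewrite qTY_avg qT_avg.
Qed.

Lemma AT_ge0 t : 0 <= AT q t.
Proof.
have [h _] := @logsum R X (fun x => pX p x * q x t) (fun x => pX p x * qT p q t)
  (fun x => ltac:(by rewrite mulr_ge0 ?ch0 // ltW))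
  (fun x => ltac:(by rewrite mulr_ge0 ?qT0 // ltW))
  (fun x e => ltac:(move/eqP: e; rewrite mulf_eq0 (negPf (pX_ne0 _)) /= => /eqP/(qT_zero q chq) e;
                    by rewrite e mulr0)).
by move: h; rewrite -mulr_suml sumpX mul1r plogq_same.
Qed.

Lemma AT_avg t : AT (avg q) t <= AT q t /\
  (AT q t = AT (avg q) t -> forall x x', sim x x' -> q x t = q x' t).
Proof.
set T := qT p q t.
pose a z := pX p z * q z t.
pose b z := pX p z * T.
pose c x := pX p x / pcls x.
have c0 : forall x, 0 < c x by move=> x; rewrite divr_gt0 ?pcls_pos.
have HL : forall x, plogq (\sum_(z | sim x z) a z) (\sum_(z | sim x z) b z) <= \sum_(z | sim x z) plogq (a z) (b z) /\
   (\sum_(z | sim x z) plogq (a z) (b z) = plogq (\sum_(z | sim x z) a z) (\sum_(z | sim x z) b z) ->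
     forall z, sim x z -> a z * \sum_(j | sim x j) b j = (\sum_(j | sim x j) a j) * b z).
  move=> x; apply: logsumP.
  - by move=> z; rewrite mulr_ge0 ?ch0 // ltW.
  - by move=> z; rewrite mulr_ge0 ?qT0 // ltW.
  - move=> z /eqP; rewrite mulf_eq0 (negPf (pX_ne0 _)) /= => /eqP/(qT_zero q chq) e.
    by rewrite /a e mulr0.
have eAT : AT q t = \sum_x c x * \sum_(z | sim x z) plogq (a z) (b z).
  transitivity (\sum_z pX p z * (plogq (a z) (b z) / pX p z)).
    by apply: eq_bigr => z _; rewrite [RHS]mulrC divfK ?pX_ne0.
  rewrite -EXw; apply: eq_bigr => x _; rewrite w_classsum /c mulrA mulrAC; congr (_ * _).
  by apply: eq_bigr => z _; rewrite mulrC divfK ?pX_ne0.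
have eATa : AT (avg q) t = \sum_x c x * plogq (\sum_(z | sim x z) a z) (\sum_(z | sim x z) b z).
  rewrite /AT qT_avg -/T; apply: eq_bigr => x _.
  rewrite -plogqZ; last by rewrite ltW.
  congr plogq.
    by rewrite /avg w_classsum /c mulrA mulrAC.
  rewrite /b -mulr_suml -/(pcls x) /c /T; field; exact: lt0r_neq0 (pcls_pos x).
rewrite eATa eAT; split.
  apply: ler_sum => x _; apply: ler_wpM2l; [exact: ltW | exact: (proj1 (HL x))].
move=> e x x' xx'.
have [T0|Tn0] := eqVneq T 0; first by rewrite !(qT_zero q chq _ T0).
pose S x := \sum_(z | sim x z) plogq (a z) (b z).
pose L x := plogq (\sum_(z | sim x z) a z) (\sum_(z | sim x z) b z).
have d1 : forall x, 0 <= c x * (S x - L x).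
  move=> y; apply: mulr_ge0; first exact: ltW.
  rewrite subr_ge0; exact: (proj1 (HL y)).
have ex : S x = L x.
  have d0 : \sum_x (c x * (S x - L x)) = 0.
    by under eq_bigr do rewrite mulrBr; rewrite sumrB e subrr.
  have := @psumr_eq0P _ _ xpredT (fun x => c x * (S x - L x)) (fun x _ => d1 x) d0 x isT.
  by move/eqP; rewrite mulf_eq0 (gt_eqF (c0 x)) /= subr_eq0 => /eqP.
have h1 := (proj2 (HL x)) ex x (sim_refl x).
have h2 := (proj2 (HL x)) ex x' xx'.
have Bx : \sum_(j | sim x j) b j != 0.
  rewrite /b -mulr_suml -/(pcls x) mulf_neq0 //; exact: lt0r_neq0 (pcls_pos x).
move: h1 h2; rewrite /a /b.
set B := \sum_(j | sim x j) b j; set A := \sum_(j | sim x j) a j => h1 h2.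
have e1 : q x t * B = A * T by apply: (mulfI (pX_ne0 x)); rewrite mulrA h1; ring.
have e2 : q x' t * B = A * T by apply: (mulfI (pX_ne0 x')); rewrite mulrA h2; ring.
have : q x t * B = q x' t * B by rewrite e1 e2.
by move/(mulIf Bx).
Qed.

End ch2.

Definition Hval := \sum_x pX p x * - ln (pcls x).

Lemma T_single (h : X -> nat -> R) t x : channel h -> single h -> cconst h -> 0 < h x t ->
  qT p h t = pcls x * h x t.
Proof.
move=> chh sh ch hx; rewrite /qT /pcls mulr_suml [RHS]big_mkcond /=.
apply: eq_bigr => z _; case: ifP => xz; first by rewrite (ch t x z xz).
have [->|nz] := eqVneq (h z t) 0; first by rewrite mulr0.
by have := sh t x z hx (ltac:(by rewrite lt0r nz ch0)); rewrite xz.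
Qed.

Lemma MIXT_good (h : X -> nat -> R) : channel h -> single h -> cconst h ->
  MI_XT p h = Hval%:E.
Proof.
move=> chh sh ch; rewrite /MI_XT /Hval -(@S1 h (fun x => pX p x * - ln (pcls x)) chh); last first.
  move=> x; apply: mulr_ge0; [exact: ltW | rewrite oppr_ge0; apply: ln_le0; exact: pcls_le1].
apply: eq_eseriesr => t _; congr EFin; apply: eq_bigr => x _.
have [->|nz] := eqVneq (h x t) 0; first by rewrite !mulr0 plogq0.
have hx : 0 < h x t by rewrite lt0r nz ch0.
rewrite (@T_single h t x chh sh ch hx) /plogq mulf_eq0 (negPf (pX_ne0 _)) (negPf nz) /=.
have -> : pX p x * h x t / (pX p x * (pcls x * h x t)) = (pcls x)^-1.
  by field; rewrite nz pX_ne0 /= lt0r_neq0 // pcls_pos.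
rewrite lnV ?posrE ?pcls_pos //; ring.
Qed.

Definition q0 (x : X) (t : nat) : R := if t == nat_of_ord (enum_rank (piX p x)) then 1 else 0.

Lemma q0_ch : channel q0.
Proof.
split; first by move=> x t; rewrite /q0; case: ifP.
by move=> x; rewrite /q0 series_ind.
Qed.
Lemma q0_single : single q0.
Proof.
move=> t x x'; rewrite /q0; case: eqP => [->|]; last by rewrite ltxx.
case: eqP => [e _ _|]; last by rewrite ltxx.
by apply/piX_eq; apply: enum_rank_inj; apply: ord_inj.
Qed.
Lemma q0_cconst : cconst q0.
Proof. by move=> t x x' /piX_eq e; rewrite /q0 e. Qed.

Lemma IB_cconst lam k : lam <= MI_XY p -> IB p lam k -> cconst k.
Proof.
move=> hl [chk [feas mn]].
have cha := @avg_ch k chk.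
have h0 : (MI_XT p k <= Hval%:E)%E.
  rewrite -(@MIXT_good q0 q0_ch q0_single q0_cconst); apply: mn; first exact: q0_ch.
  by rewrite (@MITY_single q0 q0_ch q0_single) lee_fin.
have h1 : (MI_XT p k <= MI_XT p (avg k))%E.
  by apply: mn; [exact: cha | rewrite (@MITY_avg k)].
have e := @series_eq R (AT (avg k)) (AT k) (@AT_ge0 (avg k) cha)
  (fun t => proj1 (@AT_avg k chk t)) h1.
move=> t x x' xx'; apply: (proj2 (@AT_avg k chk t)) => //.
apply/esym/e; apply: le_lt_trans (ltry Hval); apply: le_trans h0.
apply: lee_nneseries => [s _ _|s _]; rewrite lee_fin.
  exact: (@AT_ge0 (avg k) cha).
exact: (proj1 (@AT_avg k chk s)).
Qed.

Lemma ch_pos (A : Type) (q : A -> nat -> R) : channel q -> forall a, exists t, 0 < q a t.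
Proof.
move=> [q0' q1] a; apply: contrapT => hn.
have z : forall t, q a t = 0.
  move=> t; apply/eqP; rewrite eq_le q0' andbT leNgt; apply/negP => h; apply: hn; by exists t.
have := q1 a; rewrite eseries0 // => [|i _ _]; last by rewrite z.
by move=> /(congr1 fine) /= /eqP; rewrite eq_sym oner_eq0.
Qed.

Lemma Gci_sim s : in_Gci p s <-> forall x, sim (s x) x.
Proof.
split; first by move=> h x; apply/simP => y; rewrite h.
by move=> h x y; move/simP: (h x) => ->.
Qed.

Lemma part1 k : IB p (MI_XY p) k <->
  exists g : Xbar p -> nat -> R, channel g /\ congruent g /\ k = (fun x t => g (piX p x) t).
Proof.
split.
  move=> hk; have cc := @IB_cconst _ k (le_refl _) hk.
  case: hk => chk [feas mn].
  have sk := @feasible_single _ chk feas.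
  have [x0 _] : exists x : X, true.
    apply/existsP; apply: contraT => /existsPn h.
    have := sumpX; rewrite big1 => [/eqP|x _]; last by move: (h x).
    by rewrite eq_sym oner_eq0.
  exists (fun c t => k (rep c) t); split.
    by split => [c t|c]; [exact: ch0 | exact: ch1].
  split; last first.
    apply/funext => x; apply/funext => t; apply: cc.
    by apply: sim_sym; apply/piX_eq; rewrite rep_spec.
  pose f t := if [pick x | 0 < k x t] is Some x then piX p x else piX p x0.
  have gpos : forall a t, 0 < k (rep a) t -> f t = a.
    move=> a t ha; rewrite /f; case: pickP => [x hx|hn]; last by move: (hn (rep a)); rewrite ha.
    rewrite -(rep_spec a); apply/piX_eq; exact: sk t x (rep a) hx ha.
  exists f => a a'; case: (eqVneq a a') => [<-|ne].
    rewrite [X in _ = X](_ : _ = 1%E) // -(@ch1 _ chk (rep a)); apply: eq_eseriesr => t _; congr EFin.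
    case: eqP => // ft; have [//|nz] := eqVneq (k (rep a) t) 0.
    by case: ft; apply: gpos; rewrite lt0r nz ch0.
  rewrite [X in _ = X](_ : _ = 0%E) // eseries0 // => t _ _; case: eqP => // ft.
  have [->//|nz] := eqVneq (k (rep a) t) 0.
  by move: ne; rewrite -ft (gpos a t) ?eqxx // lt0r nz ch0.
move=> [g [chg [cg ek]]]; subst k; case: cg => f hf.
have gpos : forall a t, 0 < g a t -> f t = a.
  move=> a t ha; apply/eqP; apply: contraT => ne.
  have := hf a (f t); rewrite eq_sym (negPf ne) /= => hs.
  have nn : forall s, (0 <= (if f s == f t then g a s else 0)%:E)%E.
    by move=> s; case: (f s == f t); rewrite lee_fin // (proj1 chg).
  have := @term_le_series R (fun s => (if f s == f t then g a s else 0)%:E) t nn.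
  by rewrite hs eqxx lee_fin leNgt ha.
have chk : channel (fun x t => g (piX p x) t).
  by split => [x t|x]; [exact: (proj1 chg) | exact: (proj2 chg)].
have sk : single (fun x t => g (piX p x) t).
  move=> t x x' h1 h2; apply/piX_eq; by rewrite -(gpos _ _ h1) -(gpos _ _ h2).
have ck : cconst (fun x t => g (piX p x) t).
  by move=> t x x' /piX_eq ->.
split; first exact: chk.
split; first by rewrite (@MITY_single _ chk sk).
move=> q chq fq.
have sq := @feasible_single _ chq fq.
rewrite (@MIXT_good _ chk sk ck) -(@MIXT_good _ (@avg_ch q chq) (@avg_single q chq sq) (avg_cconst q)).
apply: lee_nneseries => [s _ _|s _]; rewrite lee_fin.
  exact: (@AT_ge0 _ (@avg_ch q chq)).
exact: (proj1 (@AT_avg q chq s)).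
Qed.

Lemma part2 s k : IB p (MI_XY p) k -> (in_Gci p s <-> (fun x t => k (s x) t) = k).
Proof.
move=> hk; have cc := @IB_cconst _ k (le_refl _) hk.
case: hk => chk [feas _]; have sk := @feasible_single _ chk feas.
rewrite Gci_sim; split.
  by move=> h; apply/funext => x; apply/funext => t; apply: cc.
move=> e x; have [t ht] := @ch_pos _ _ chk x.
have ex : k (s x) t = k x t by move: (congr1 (fun F => F x t) e).
apply: (sk t (s x) x _ ht); by rewrite ex.
Qed.

Lemma part3 s : in_Gci p s -> forall lam, 0 <= lam <= MI_XY p ->
  forall k, IB p lam k -> (fun x t => k (s x) t) = k.
Proof.
move=> /Gci_sim h lam /andP[_ hl] k hk; have cc := @IB_cconst lam k hl hk.
by apply/funext => x; apply/funext => t; apply: cc.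
Qed.

Lemma part4 x x' : piX p x = piX p x' <-> exists s : {perm X}, in_Gci p s /\ s x = x'.
Proof.
rewrite piX_eq; split.
  move=> h; exists (tperm x x'); split; last exact: tpermL.
  apply/Gci_sim => z; case: tpermP => [->|->|_ _]; [exact: sim_sym | exact: h | exact: sim_refl].
move=> [s [/Gci_sim h <-]]; exact: sim_sym.
Qed.

End Main.

Theorem theorem1 (R : realType) (X Y : finType) (p : X -> Y -> R) :
  is_joint p -> (forall x, 0 < pX p x) ->
  let Lam := MI_XY p in
  (* (i) *)
  (forall k : X -> nat -> R,
     IB p Lam k <->
     exists g : Xbar p -> nat -> R,
       channel g /\ congruent g /\ k = (fun x t => g (piX p x) t)) /\
  (* (ii) *)
  (forall (s : {perm X}) (k : X -> nat -> R),
     IB p Lam k -> (in_Gci p s <-> (fun x t => k (s x) t) = k)) /\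
  (* (iii) *)
  (forall s : {perm X}, in_Gci p s ->
     forall lam : R, 0 <= lam <= Lam ->
     forall k : X -> nat -> R, IB p lam k -> (fun x t => k (s x) t) = k) /\
  (* (iv) *)
  (forall x x' : X,
     piX p x = piX p x' <-> exists s : {perm X}, in_Gci p s /\ s x = x').
Proof.
move=> Hj Hpos Lam; split; first exact: part1 Hj Hpos.
split; first exact: part2 Hj Hpos.
split; first exact: part3 Hj Hpos.
exact: part4.
Qed.
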